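(* Let $P$ be a profile of linear orders on a finite set $A$ which is single-crossing with respect to some tree on its voter set. Let $\mathcal{D}(P)$ be the set of distinct linear orders occurring in $P$. Then $\mathcal{D}(P)$ is a Condorcet domain.
   Context: A profile is a finite tuple of linear orders on $A$, one for each voter; voter $i$ prefers $a$ to $b$, written $a\succ_i b$. Given a tree $T=(V,E)$ whose vertex set $V$ is the set of voters, the profile is single-crossing with respect to $T$ if for every pair of distinct alternatives $a,b$ one of the following holds: (i) there is an edge $e\in E$ such that, removing $e$ from $T$, the two resulting subtrees have vertex sets $V_1,V_2$ with all voters in $V_1$ preferring $a$ to $b$ and all voters in $V_2$ preferring $b$ to $a$; or (ii) all voters prefer $a$ to $b$, or all voters prefer $b$ to $a$. The strict majority relation of a profile: $a\succ b$ iff strictly more voters prefer $a$ to $b$ than prefer $b$ to $a$. A set $C$ of linear orders on $A$ is a Condorcet domain if for every profile (with any finite number of voters) all of whose orders belong to $C$, the strict majority relation of that profile is transitive. *)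

(* Defs.v *)
From mathcomp Require Import all_boot.
Set Implicit Arguments.
Unset Strict Implicit.
Unset Printing Implicit Defensive.

(* A (strict) linear order on A, as a boolean relation: "r x y" = x is preferred to y. *)
Definition linear_order (A : finType) (r : rel A) : Prop :=
  [/\ irreflexive r, transitive r & forall x y, x != y -> r x y || r y x].

Definition simple_graph (V : finType) (e : rel V) : Prop :=
  symmetric e /\ irreflexive e.

Definition is_cycle (V : finType) (e : rel V) (x : V) (p : seq V) : Prop :=
  [/\ 2 <= size p, uniq (x :: p), path e x p & e (last x p) x].

Definition is_tree (V : finType) (e : rel V) : Prop :=
  [/\ simple_graph e,
      (forall x y, connect e x y) &
      (forall x p, ~ is_cycle e x p)].

Definition remove_edge (V : finType) (e : rel V) (u v : V) : rel V :=
  fun x y => e x y && ~~ (((x == u) && (y == v)) || ((x == v) && (y == u))).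

Definition side (V : finType) (e : rel V) (u v : V) : {set V} :=
  [set x | connect (remove_edge e u v) u x].

Definition single_crossing (A V : finType) (e : rel V) (P : V -> rel A) : Prop :=
  forall a b : A, a != b ->
    (exists u v, [/\ e u v,
                   (forall x, x \in side e u v -> P x a b) &
                   (forall x, x \in side e v u -> P x b a)])
    \/ (forall x, P x a b) \/ (forall x, P x b a).

Definition majority (A : finType) (n : nat) (Q : 'I_n -> rel A) : rel A :=
  fun a b => #|[set i | Q i b a]| < #|[set i | Q i a b]|.

Definition condorcet_domain (A : finType) (C : rel A -> Prop) : Prop :=
  forall (n : nat) (Q : 'I_n -> rel A),
    (forall i, C (Q i)) -> transitive (majority Q).

(* The set D(P) of orders occurring in P (equality of orders = extensional). *)
Definition orders_of (A V : finType) (P : V -> rel A) : rel A -> Prop :=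
  fun r => exists v : V, forall x y, P v x y = r x y.

(* Main.v *)
Require Import Defs.
From mathcomp Require Import all_boot.
Set Implicit Arguments.
Unset Strict Implicit.
Unset Printing Implicit Defensive.

Inductive halfsp (V : finType) (e : rel V) (X : pred V) (u v : V) : Prop :=
  HalfSp of e u v & X u & ~~ X v &
      (forall s t, e s t -> X s -> ~~ X t -> (s == u) && (t == v)) &
      (forall s t, e s t -> ~~ X s -> X t -> (s == v) && (t == u)) &
      (forall m, X m -> exists p, [/\ path e u p, last u p = m & all X (u :: p)]) &
      (forall m, ~~ X m -> exists p, [/\ path e v p, last v p = m & all (predC X) (v :: p)]).
Arguments halfsp {V} e X u v.

Lemma half_compl (V : finType) (e : rel V) (X : pred V) u v :
  halfsp e X u v -> symmetric e -> halfsp e (predC X) v u.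
Proof.
case=> euv Xu Xv B1 B2 P1 P2 sym; apply: HalfSp => /=.
- by rewrite sym.
- exact: Xv.
- by rewrite Xu.
- move=> s t est /= Ns Xt; apply: B2 => //; exact/negPn.
- move=> s t est /= Xs Nt; apply: B1 => //; exact/negPn.
- move=> m Nm; have [p [H1 H2 H3]] := P2 m Nm; exists p; split => //.
- move=> m /negPn Xm; have [p [H1 H2 H3]] := P1 m Xm; exists p; split => //.
  apply: sub_all H3 => z /= ->; done.
Qed.

Lemma cross (V : finType) (e : rel V) (X W : pred V) u v p0 p :
  halfsp e X u v -> path e p0 p -> all W (p0 :: p) -> X p0 -> ~~ X (last p0 p) ->
  W u && W v.
Proof.
case=> _ _ _ B1 _ _ _.
elim: p p0 => [|q p IH] p0 /=; first by move=> _ _ ->.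
case/andP=> eq pth /and3P [Wp0 Wq Wp] Xp0 Xl.
case Xq: (X q).
  by apply: (IH q pth) => //=; rewrite Wq.
have := B1 _ _ eq Xp0 (negbT Xq).
by case/andP => /eqP <- /eqP <-; rewrite Wp0 Wq.
Qed.

Lemma geo (V : finType) (e : rel V) (X Y Z : pred V) u1 v1 u2 v2 u3 v3 :
  symmetric e ->
  halfsp e X u1 v1 -> halfsp e Y u2 v2 -> halfsp e Z u3 v3 ->
  (forall m, X m -> Y m -> Z m) ->
  (forall m, X m -> Z m) \/ (forall m, Y m -> Z m) \/ (forall m, X m -> ~~ Y m).
Proof.
move=> sym hX hY hZ XYZ.
case: (boolP [exists m, X m && ~~ Z m]); last first.
  move/existsPn=> H; left=> m Xm; move: (H m); rewrite Xm /=; by move/negPn.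
case/existsP=> x /andP [Xx Zx].
case: (boolP [exists m, Y m && ~~ Z m]); last first.
  move/existsPn=> H; right; left=> m Ym; move: (H m); rewrite Ym /=; by move/negPn.
case/existsP=> y /andP [Yy Zy].
case: (boolP [exists m, X m && Y m]); last first.
  move/existsPn=> H; right; right=> m Xm; move: (H m); by rewrite Xm.
case/existsP=> m /andP [Xm Ym].
exfalso.
have Yx : ~~ Y x by apply/negP => Yx; move: Zx; rewrite XYZ.
have Xy : ~~ X y by apply/negP => Xy; move: Zy; rewrite XYZ.
have hZc := half_compl hZ sym.
have hXc := half_compl hX sym.
have hYc := half_compl hY sym.
case: (hZ) => _ _ Zv3 _ _ _ PZ.
have [px [px1 px2 px3]] := PZ x Zx.
have [py [py1 py2 py3]] := PZ y Zy.
have W1 : ~~ Z u1 && ~~ Z v1.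
  case: (boolP (X v3)) => Xv3.
    by apply: (cross hX py1 py3) => //; rewrite py2.
  by have := cross hXc px1 px3 Xv3; rewrite px2 /= negbK => /(_ Xx) /andP [-> ->].
have W2 : ~~ Z u2 && ~~ Z v2.
  case: (boolP (Y v3)) => Yv3.
    by apply: (cross hY px1 px3) => //; rewrite px2.
  by have := cross hYc py1 py3 Yv3; rewrite py2 /= negbK => /(_ Yy) /andP [-> ->].
case: (hX) => _ _ _ _ _ PX _.
case: (hY) => _ _ _ _ _ PY _.
have [qx [qx1 qx2 qx3]] := PX m Xm.
have [qy [qy1 qy2 qy3]] := PY m Ym.
case/andP: W1 => Zu1 _; case/andP: W2 => Zu2 _.
have := cross hZc qx1 qx3 Zu1; rewrite qx2 /= XYZ // => /(_ isT) /andP [Xv3' _].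
have := cross hZc qy1 qy3 Zu2; rewrite qy2 /= XYZ // => /(_ isT) /andP [Yv3' _].
by move: Zv3; rewrite XYZ.
Qed.

Lemma lin_asym (A : finType) (r : rel A) x y : linear_order r -> r x y -> ~~ r y x.
Proof.
case=> irr tr _ rxy; apply/negP => ryx.
by have := tr _ _ _ rxy ryx; rewrite irr.
Qed.

Lemma remove_edge_sym (V : finType) (e : rel V) u v :
  remove_edge e u v =2 remove_edge e v u.
Proof.
move=> x y; rewrite /remove_edge; congr (_ && ~~ _).
by rewrite orbC.
Qed.

Lemma covering (V : finType) (e : rel V) u v :
  (forall x y, connect e x y) -> forall x,
  connect (remove_edge e u v) u x || connect (remove_edge e u v) v x.
Proof.
move=> conn x; have /connectP [p0 pth0 ->] := conn u x.
set I := fun z => connect (remove_edge e u v) u z || connect (remove_edge e u v) v z.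
suff H : forall z p, path e z p -> I z -> I (last z p).
  by apply: H pth0 _; rewrite /I connect0.
move=> z1 p1; elim: p1 z1 => [|q p IH] z //= /andP [ezq pth] Hz.
apply: IH => //; rewrite /I.
case R: (remove_edge e u v z q).
  case/orP: Hz => H; apply/orP; [left|right]; apply: connect_trans H _; exact: connect1.
move: R; rewrite /remove_edge ezq /= => /negbFE /orP [] /andP [_ /eqP ->];
  by rewrite connect0 ?orbT.
Qed.

Lemma halfish (A V : finType) (e : rel V) (P : V -> rel A) (a b : A) :
  is_tree e -> (forall v, linear_order (P v)) ->
  (exists u v, [/\ e u v,
                   (forall x, x \in side e u v -> P x a b) &
                   (forall x, x \in side e v u -> P x b a)])
    \/ (forall x, P x a b) \/ (forall x, P x b a) ->
  (exists u v, halfsp e (fun x => P x a b) u v) \/ (forall x, P x a b) \/ (forall x, ~~ P x a b).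
Proof.
case=> [[sym _] conn _] lin [|[|H]]; last first.
- right; right => x; exact: lin_asym (H x).
- by right; left.
case=> u [v [euv S1 S2]]; left; exists u, v.
set X := fun x => P x a b.
have sideE : forall x, x \in side e v u -> connect (remove_edge e u v) v x.
  by move=> x; rewrite inE (eq_connect (remove_edge_sym e v u)).
have sideI : forall x, connect (remove_edge e u v) v x -> x \in side e v u.
  by move=> x; rewrite inE (eq_connect (remove_edge_sym e v u)).
have S2' : forall x, x \in side e v u -> ~~ X x by move=> x /S2; exact: lin_asym.
have cov : forall x, (x \in side e u v) || (x \in side e v u).
  by move=> x; have := covering u v conn x; case/orP => H; [rewrite inE H | rewrite sideI ?orbT].
have XS : forall x, X x -> x \in side e u v.
  by move=> x Xx; have := cov x; case/orP => // /S2'; rewrite Xx.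
have NS : forall x, ~~ X x -> x \in side e v u.
  by move=> x Nx; have := cov x; case/orP => // /S1 Xx; move: Nx; rewrite /X Xx.
have Xu : X u by apply: S1; rewrite inE connect0.
have Nv : ~~ X v by apply: S2'; rewrite inE connect0.
have B1 : forall s t, e s t -> X s -> ~~ X t -> (s == u) && (t == v).
  move=> s t est Xs Nt.
  case R: (remove_edge e u v s t); last first.
    move: R; rewrite /remove_edge est /= => /negbFE /orP [] // /andP [/eqP Es _].
    by move: Nv; rewrite -Es Xs.
  have : t \in side e u v by move: (XS s Xs); rewrite !inE => H; apply: connect_trans H (connect1 R).
  by move/S1; rewrite /X => Xt; move: Nt; rewrite /X Xt.
apply: HalfSp => //.
- move=> s t est Ns Xt; rewrite andbC; apply: B1 => //; by rewrite sym.
- move=> m /XS; rewrite inE => /connectP [p pth ->]; exists p; split => //.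
    by apply: sub_path pth => x y /andP [].
  apply/allP => z /(path_connect pth) Hz; apply: S1; by rewrite inE.
- move=> m /NS /sideE /connectP [p pth ->]; exists p; split => //.
    by apply: sub_path pth => x y /andP [].
  apply/allP => z /(path_connect pth) Hz; apply: S2'; exact: sideI.
Qed.

Lemma tri (V : finType) (e : rel V) (X Y Z : pred V) :
  symmetric e ->
  (exists u v, halfsp e X u v) \/ (forall x, X x) \/ (forall x, ~~ X x) ->
  (exists u v, halfsp e Y u v) \/ (forall x, Y x) \/ (forall x, ~~ Y x) ->
  (exists u v, halfsp e Z u v) \/ (forall x, Z x) \/ (forall x, ~~ Z x) ->
  (forall m, X m -> Y m -> Z m) ->
  (forall m, X m -> Z m) \/ (forall m, Y m -> Z m) \/ (forall m, X m -> ~~ Y m).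
Proof.
move=> sym hX hY hZ XYZ.
case: hX => [[u1 [v1 hX]]|[H|H]]; last first.
- by right; right => m; rewrite (negbTE (H m)).
- by right; left => m; apply: XYZ.
case: hY => [[u2 [v2 hY]]|[H|H]]; last first.
- by right; right => m _; apply: H.
- by left => m Xm; apply: XYZ.
case: hZ => [[u3 [v3 hZ]]|[H|H]]; last first.
- right; right => m Xm; apply/negP => Ym; have := H m; by rewrite XYZ.
- by left.
exact: geo sym hX hY hZ XYZ.
Qed.

Theorem theorem2 (A V : finType) (e : rel V) (P : V -> rel A) :
  is_tree e ->
  (forall v, linear_order (P v)) ->
  single_crossing e P ->
  condorcet_domain (orders_of P).
Proof.
move=> tree lin sc n Q HQ b a c.
rewrite /majority.
set N := fun x y => #|[set i | Q i x y]|.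
have mono : forall x y x' y', (forall v, P v x y -> P v x' y') -> N x y <= N x' y'.
  move=> x y x' y' H; apply: subset_leq_card; apply/subsetP => i; rewrite !inE.
  by have [v Hv] := HQ i; rewrite -!Hv; apply: H.
rewrite -/(N a b) -/(N b a) -/(N b c) -/(N c b) -/(N a c) -/(N c a).
move=> mab mbc.
case: (eqVneq a b) => [Eab|nab]; first by move: mab; rewrite Eab ltnn.
case: (eqVneq b c) => [Ebc|nbc]; first by move: mbc; rewrite Ebc ltnn.
case: (eqVneq a c) => [Eac|nac].
  by move: mbc; rewrite -Eac => /(ltn_trans mab); rewrite ltnn.
have asym := fun v x y => @lin_asym A (P v) x y (lin v).
have tot : forall v x y, x != y -> ~~ P v x y -> P v y x.
  move=> v x y nxy; case: (lin v) => _ _ H; move: (H x y nxy); case: (P v x y) => //= Pyx _.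
have trans : forall v x y z, P v x y -> P v y z -> P v x z.
  by move=> v x y z; case: (lin v) => _ tr _; apply: tr.
case: tree => [[sym irr] conn nc].
have hX := halfish (a:=a) (b:=b) (And3 (conj sym irr) conn nc) lin (sc a b nab).
have hY := halfish (a:=b) (b:=c) (And3 (conj sym irr) conn nc) lin (sc b c nbc).
have hZ := halfish (a:=a) (b:=c) (And3 (conj sym irr) conn nc) lin (sc a c nac).
have := tri sym hX hY hZ (fun m => trans m a b c).
case=> [H|[H|H]].
- have h1 : N c a <= N b a.
    apply: mono => v Pca; apply: tot; first by [].
    apply/negP => Pab; by move: (asym _ _ _ (H v Pab)); rewrite Pca.
  have h2 : N a b <= N a c by apply: mono.
  by apply: leq_ltn_trans h1 (leq_trans mab h2).
- have h1 : N c a <= N c b.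
    apply: mono => v Pca; apply: tot => //.
    apply/negP => Pbc; by move: (asym _ _ _ (H v Pbc)); rewrite Pca.
  have h2 : N b c <= N a c by apply: mono.
  by apply: leq_ltn_trans h1 (leq_trans mbc h2).
- have h1 : N b c <= N b a.
    apply: mono => v Pbc; apply: tot; first by [].
    by apply/negP => Pab; move: (H v Pab); rewrite Pbc.
  have h2 : N a b <= N c b by apply: mono => v /H; apply: tot.
  have := leq_ltn_trans h1 (leq_trans mab h2).
  by move=> /(ltn_trans mbc); rewrite ltnn.
Qed.
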